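(* For any constants $\beta_1, \beta_2 \in [0,1)$ with $\beta_1 < \sqrt{\beta_2}$, there exist a one-dimensional online convex optimization problem (a compact convex feasible set $\mathcal{F} \subset \mathbb{R}$ and a sequence of convex loss functions $f_t$ with uniformly bounded gradients) and an initial point $x_1 \in \mathcal{F}$ such that, for every initial step size $\alpha > 0$, the iterates of \textsc{Adam} with parameters $\alpha, \beta_1, \beta_2$ satisfy $R_T/T \not\to 0$ as $T \to \infty$.
   Context: \textsc{Adam} (without debiasing) on a closed convex set $\mathcal{F} \subset \mathbb{R}^d$ with loss functions $f_1, f_2, \dots$, initial point $x_1 \in \mathcal{F}$, initial step size $\alpha > 0$ and constants $\beta_1, \beta_2 \in [0,1)$ is defined as follows. Set $m_0 = v_0 = 0 \in \mathbb{R}^d$. For $t = 1, 2, \dots$: $g_t = \nabla f_t(x_t)$; $m_t = \beta_1 m_{t-1} + (1-\beta_1) g_t$; $v_t = \beta_2 v_{t-1} + (1-\beta_2) g_t^2$ (square taken coordinatewise); $V_t = \mathrm{diag}(v_t)$; $\alpha_t = \alpha/\sqrt{t}$; $\hat{x}_{t+1} = x_t - \alpha_t V_t^{-1/2} m_t$; $x_{t+1} = \Pi_{\mathcal{F}, \sqrt{V_t}}(\hat{x}_{t+1})$, where for a positive definite matrix $M$, $\Pi_{\mathcal{F}, M}(y) = \arg\min_{x \in \mathcal{F}} \|M^{1/2}(x-y)\|$. The regret after $T$ steps is $R_T = \sum_{t=1}^T f_t(x_t) - \min_{x \in \mathcal{F}} \sum_{t=1}^T f_t(x)$. *)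

(* Defs.v *)
From Stdlib Require Import Reals Lra.
Open Scope R_scope.

Definition convex_fun (f : R -> R) : Prop :=
  forall x y l, 0 <= l <= 1 ->
    f (l * x + (1 - l) * y) <= l * f x + (1 - l) * f y.

(* Projection onto the interval [a,b] (one-dimensional feasible set).
   In dimension 1 the weighted projection Pi_{F,sqrt V_t} is just the
   Euclidean projection, i.e. clamping. *)
Definition clamp (a b y : R) : R := Rmax a (Rmin b y).

(* Adam (without debiasing) on F = [a,b], with gradient function
   g t x = f_t'(x) (loss f_t for t >= 1).
   adam_state ... n = (x_{n+1}, m_n, v_n); adam_state 0 = (x_1, 0, 0). *)
Fixpoint adam_state (a b : R) (g : nat -> R -> R) (x1 alpha beta1 beta2 : R)
  (n : nat) : R * R * R :=
  match n with
  | O => (x1, 0, 0)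
  | S k =>
    let '(x, m, v) := adam_state a b g x1 alpha beta1 beta2 k in
    let t := S k in
    let gt := g t x in
    let m' := beta1 * m + (1 - beta1) * gt in
    let v' := beta2 * v + (1 - beta2) * gt ^ 2 in
    let alpha_t := alpha / sqrt (INR t) in
    let xhat := x - alpha_t * m' / sqrt v' in
    (clamp a b xhat, m', v')
  end.

(* The t-th iterate x_t (meaningful for t >= 1). *)
Definition adam_iter (a b : R) (g : nat -> R -> R) (x1 alpha beta1 beta2 : R)
  (t : nat) : R :=
  fst (fst (adam_state a b g x1 alpha beta1 beta2 (pred t))).

Fixpoint sum1 (h : nat -> R) (T : nat) : R :=
  match T with
  | O => 0
  | S k => sum1 h k + h (S k)
  end.

Definition is_min_on (a b : R) (F : R -> R) (c : R) : Prop :=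
  (exists x, a <= x <= b /\ F x = c) /\ (forall x, a <= x <= b -> c <= F x).

Definition adam_regret (a b : R) (f g : nat -> R -> R)
  (x1 alpha beta1 beta2 : R) (T : nat) (r : R) : Prop :=
  exists c, is_min_on a b (fun x => sum1 (fun t => f t x) T) c /\
    r = sum1 (fun t => f t (adam_iter a b g x1 alpha beta1 beta2 t)) T - c.

(* Main.v *)
Require Import Defs.
From Stdlib Require Import Reals Lra Lia.
Open Scope R_scope.

Fixpoint ph (P k : nat) : nat :=
  match k with
  | O => O
  | S k' => if Nat.ltb (S (ph P k')) P then S (ph P k') else O
  end.

Lemma ph_S (P k : nat) : (0 < P)%nat ->
  (ph P (S k) = S (ph P k) /\ (S (ph P k) < P)%nat) \/
  (ph P (S k) = O /\ S (ph P k) = P).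
Proof.
  intros HP. induction k as [|k IH].
  - simpl. destruct (Nat.ltb 1 P) eqn:E.
    + left. apply Nat.ltb_lt in E. auto.
    + right. apply Nat.ltb_ge in E. split; [reflexivity|lia].
  - remember (S k) as k1.
    cbn [ph]. destruct (Nat.ltb (S (ph P k1)) P) eqn:E.
    + left. apply Nat.ltb_lt in E. auto.
    + right. apply Nat.ltb_ge in E. split; [reflexivity|].
      assert (ph P k1 < P)%nat.
      { subst k1. destruct IH as [[-> H]|[-> H]]; lia. }
      lia.
Qed.

Lemma ph_lt (P k : nat) : (0 < P)%nat -> (ph P k < P)%nat.
Proof.
  intros HP. destruct k. simpl. lia.
  destruct (ph_S P k HP) as [[-> H]|[-> H]]; lia.
Qed.

Lemma ph_small (P k : nat) : (0 < P)%nat -> (k < P)%nat -> ph P k = k.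
Proof.
  intros HP. induction k; intros Hk. reflexivity.
  destruct (ph_S P k HP) as [[-> H]|[-> H]]; rewrite IHk in *; lia.
Qed.

Lemma ph_le (P k : nat) : (0 < P)%nat -> (ph P k <= k)%nat.
Proof.
  intros HP. induction k. simpl; lia.
  destruct (ph_S P k HP) as [[-> H]|[-> H]]; lia.
Qed.

Lemma start_ge (P k : nat) : (0 < P)%nat -> (P <= k)%nat -> (P <= k - ph P k)%nat.
Proof.
  intros HP. induction k; intros Hk. lia.
  destruct (ph_S P k HP) as [[E H]|[E H]]; rewrite E.
  - destruct (Nat.le_gt_cases P k) as [Hle|Hgt].
    + specialize (IHk Hle). lia.
    + assert (k = P - 1)%nat by lia. rewrite (ph_small P k HP Hgt) in H. lia.
  - lia.
Qed.

Lemma sqrt_ge (A v : R) : 0 <= A -> A ^ 2 <= v -> A <= sqrt v.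
Proof. intros HA H. rewrite <- (sqrt_pow2 A HA). apply sqrt_le_1_alt. exact H. Qed.

Lemma div_nonpos (m v : R) : m <= 0 -> 0 <= v -> (v = 0 -> m = 0) -> m / sqrt v <= 0.
Proof.
  intros Hm Hv H0. destruct (Req_dec v 0) as [E|E].
  - rewrite (H0 E). unfold Rdiv. rewrite Rmult_0_l. lra.
  - assert (0 < sqrt v) by (apply sqrt_lt_R0; lra).
    unfold Rdiv. assert (0 < / sqrt v) by (apply Rinv_0_lt_compat; lra). nra.
Qed.

Lemma pow_le1 (b : R) (n : nat) : 0 <= b <= 1 -> b ^ n <= 1.
Proof. intros H. induction n; simpl. lra. assert (0 <= b ^ n) by (apply pow_le; lra). nra. Qed.

Lemma pow_mono (b : R) (m n : nat) : 0 <= b <= 1 -> (m <= n)%nat -> b ^ n <= b ^ m.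
Proof.
  intros H Hmn. replace n with (m + (n - m))%nat by lia. rewrite pow_add.
  assert (0 <= b ^ m) by (apply pow_le; lra).
  assert (b ^ (n - m) <= 1) by (apply pow_le1; lra). nra.
Qed.

Section Adam.
Variables b1 b2 : R.
Hypothesis hb1 : 0 <= b1 < 1.
Hypothesis hb2 : 0 <= b2 < 1.
Hypothesis hlt : b1 < sqrt b2.
Variables L N : nat.
Hypothesis HN : (1 <= N)%nat.

Definition P : nat := (L + 1 + N)%nat.
Definition C : R := INR N + 1.
Definition om : R := sqrt (1 - b2).
Definition sg : R := sqrt b2.
Definition rho : R := b1 / sg.

Lemma P_pos : (0 < P)%nat. Proof. unfold P; lia. Qed.
Lemma C_ge1 : 1 <= C. Proof. unfold C. pose proof (pos_INR N). lra. Qed.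
Lemma om_pos : 0 < om. Proof. unfold om. apply sqrt_lt_R0. lra. Qed.
Lemma om_sq : om ^ 2 = 1 - b2. Proof. unfold om. rewrite pow2_sqrt; lra. Qed.
Lemma sg_pos : 0 < sg. Proof. unfold sg. pose proof (sqrt_pos b2). fold sg in hlt |- *. unfold sg in *. lra. Qed.
Lemma sg_sq : sg ^ 2 = b2. Proof. unfold sg. rewrite pow2_sqrt; lra. Qed.
Lemma rho_range : 0 <= rho < 1.
Proof.
  pose proof sg_pos. unfold rho. split.
  - unfold Rdiv. apply Rmult_le_pos. lra. left; apply Rinv_0_lt_compat; lra.
  - apply (Rmult_lt_reg_r sg). lra. unfold Rdiv. rewrite Rmult_assoc, Rinv_l by lra.
    unfold sg in *. lra.
Qed.

Definition cst (k : nat) : R :=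
  if Nat.eqb (ph P k) 0 then (if Nat.leb P k then C else 0)
  else if Nat.ltb L (ph P k) then -1 else 0.

Fixpoint mm (n : nat) : R :=
  match n with O => 0 | S k => b1 * mm k + (1 - b1) * cst k end.
Fixpoint vv (n : nat) : R :=
  match n with O => 0 | S k => b2 * vv k + (1 - b2) * (cst k) ^ 2 end.

Lemma cst_le k : cst k <= C.
Proof. pose proof C_ge1. unfold cst. destruct (Nat.eqb (ph P k) 0), (Nat.leb P k), (Nat.ltb L (ph P k)); lra. Qed.
Lemma cst_ge k : -1 <= cst k.
Proof. pose proof C_ge1. unfold cst. destruct (Nat.eqb (ph P k) 0), (Nat.leb P k), (Nat.ltb L (ph P k)); lra. Qed.
Lemma cst_nz k : ph P k <> O -> cst k <= 0 /\ cst k ^ 2 <= 1.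
Proof.
  intros H. unfold cst. apply Nat.eqb_neq in H. rewrite H.
  destruct (Nat.ltb L (ph P k)); simpl; lra.
Qed.
Lemma cst_sq k : cst k ^ 2 <= C ^ 2.
Proof.
  pose proof C_ge1. pose proof (cst_le k). pose proof (cst_ge k). simpl. nra.
Qed.
Lemma cst_up k : (L < ph P k)%nat -> cst k = -1.
Proof.
  intros H. unfold cst. destruct (Nat.eqb_spec (ph P k) 0). lia.
  apply Nat.ltb_lt in H. rewrite H. reflexivity.
Qed.
Lemma cst_big k : ph P k = O -> (P <= k)%nat -> cst k = C.
Proof.
  intros H1 H2. unfold cst. rewrite H1. simpl. apply Nat.leb_le in H2. rewrite H2. reflexivity.
Qed.
Lemma cst_first k : (k < P)%nat -> cst k <= 0.
Proof.
  intros H. destruct (Nat.eq_dec (ph P k) 0) as [E|E].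
  - unfold cst. rewrite E. simpl. destruct (Nat.leb_spec P k). lia. lra.
  - apply cst_nz; auto.
Qed.

Lemma vv_nonneg n : 0 <= vv n.
Proof.
  induction n; simpl. lra. pose proof (pow2_ge_0 (cst n)). nra.
Qed.

Lemma vv_zero n : vv n = 0 -> mm n = 0.
Proof.
  induction n; simpl; intros H. reflexivity.
  pose proof (vv_nonneg n). pose proof (pow2_ge_0 (cst n)).
  assert (b2 * vv n = 0 /\ (1 - b2) * cst n ^ 2 = 0) as [Ha Hb] by (split; nra).
  assert (Hc : cst n = 0).
  { assert (Hd : cst n ^ 2 = 0) by nra. simpl in Hd. nra. }
  destruct (Req_dec b2 0) as [E|E].
  - exfalso. unfold sg in *. rewrite E, sqrt_0 in hlt. lra.
  - assert (vv n = 0) by nra. rewrite IHn by auto. rewrite Hc. ring.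
Qed.

Lemma mm_first k : (k < P)%nat -> mm (S k) <= 0.
Proof.
  induction k; intros H; simpl.
  - pose proof (cst_first 0 H). simpl in *. nra.
  - pose proof (cst_first (S k) H). simpl in IHk. specialize (IHk ltac:(lia)). nra.
Qed.

Lemma mm_bound k : mm (S k) <= C * b1 ^ (ph P k).
Proof.
  pose proof C_ge1. induction k.
  - simpl. unfold cst; simpl. destruct (Nat.leb P 0) eqn:E.
    + apply Nat.leb_le in E. pose proof P_pos. lia.
    + lra.
  - destruct (ph_S P k P_pos) as [[E H1]|[E H1]].
    + rewrite E. change (mm (S (S k))) with (b1 * mm (S k) + (1 - b1) * cst (S k)).
      assert (cst (S k) <= 0) by (apply cst_nz; lia). cbn [pow].
      pose proof (Rmult_le_compat_l b1 _ _ (proj1 hb1) IHk). nra.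
    + rewrite E. change (mm (S (S k))) with (b1 * mm (S k) + (1 - b1) * cst (S k)).
      pose proof (cst_le (S k)). assert (b1 ^ ph P k <= 1) by (apply pow_le1; lra).
      assert (mm (S k) <= C) by nra.
      cbn [pow]. nra.
Qed.

Lemma vv_lower k : 0 < mm (S k) -> (om * C * sg ^ (ph P k)) ^ 2 <= vv (S k).
Proof.
  induction k; intros Hm.
  - exfalso. simpl in Hm. unfold cst in Hm; simpl in Hm.
    destruct (Nat.leb P 0) eqn:E. apply Nat.leb_le in E. pose proof P_pos. lia. lra.
  - change (mm (S (S k))) with (b1 * mm (S k) + (1 - b1) * cst (S k)) in Hm.
    change (vv (S (S k))) with (b2 * vv (S k) + (1 - b2) * cst (S k) ^ 2).
    pose proof (pow2_ge_0 (cst (S k))).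
    destruct (ph_S P k P_pos) as [[E H1]|[E H1]].
    + rewrite E. assert (cst (S k) <= 0) by (apply cst_nz; lia).
      assert (0 < mm (S k)) by nra. specialize (IHk H2).
      assert (Hx : (om * C * sg ^ S (ph P k)) ^ 2 = b2 * (om * C * sg ^ ph P k) ^ 2)
        by (rewrite <- sg_sq; simpl; ring).
      rewrite Hx. pose proof (Rmult_le_compat_l b2 _ _ (proj1 hb2) IHk).
      assert (0 <= (1 - b2) * cst (S k) ^ 2) by (apply Rmult_le_pos; lra).
      lra.
    + rewrite E. pose proof (ph_le P k P_pos).
      rewrite (cst_big (S k) E ltac:(lia)).
      pose proof (vv_nonneg (S k)).
      replace ((om * C * sg ^ 0) ^ 2) with ((1 - b2) * C ^ 2) by (rewrite <- om_sq; simpl; ring).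
      nra.
Qed.

Lemma vv_upper k : vv (S k) <= C ^ 2 * b2 ^ (ph P k) + 1.
Proof.
  induction k.
  - simpl. unfold cst; simpl. destruct (Nat.leb P 0); simpl; pose proof C_ge1; nra.
  - change (vv (S (S k))) with (b2 * vv (S k) + (1 - b2) * cst (S k) ^ 2).
    destruct (ph_S P k P_pos) as [[E H1]|[E H1]].
    + rewrite E. assert (cst (S k) ^ 2 <= 1) by (apply cst_nz; lia).
      pose proof (Rmult_le_compat_l b2 _ _ (proj1 hb2) IHk).
      assert ((1 - b2) * cst (S k) ^ 2 <= 1 - b2) by nra.
      replace (C ^ 2 * b2 ^ S (ph P k)) with (b2 * (C ^ 2 * b2 ^ ph P k)) by (simpl; ring).
      lra.
    + rewrite E. pose proof (cst_sq (S k)).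
      assert (b2 ^ ph P k <= 1) by (apply pow_le1; lra).
      assert (0 <= C ^ 2) by (apply pow2_ge_0).
      assert (vv (S k) <= C ^ 2 + 1) by nra.
      pose proof (Rmult_le_compat_l b2 _ _ (proj1 hb2) H2).
      assert ((1 - b2) * cst (S k) ^ 2 <= (1 - b2) * C ^ 2) by (apply Rmult_le_compat_l; lra).
      replace (b2 ^ 0) with 1 by reflexivity. nra.
Qed.

Lemma u_down k : mm (S k) / sqrt (vv (S k)) <= rho ^ (ph P k) / om.
Proof.
  pose proof om_pos. pose proof sg_pos. pose proof rho_range.
  assert (0 <= rho ^ ph P k / om).
  { unfold Rdiv. apply Rmult_le_pos. apply pow_le; lra. left; apply Rinv_0_lt_compat; lra. }
  destruct (Rle_dec (mm (S k)) 0) as [Hm|Hm].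
  - pose proof (div_nonpos _ _ Hm (vv_nonneg _) (vv_zero _)). lra.
  - apply Rnot_le_lt in Hm. pose proof (vv_lower k Hm) as Hv.
    pose proof C_ge1. assert (0 < sg ^ ph P k) by (apply pow_lt; lra).
    assert (HA : 0 < om * C * sg ^ ph P k) by (apply Rmult_lt_0_compat; [apply Rmult_lt_0_compat|]; lra).
    pose proof (sqrt_ge _ _ (Rlt_le _ _ HA) Hv) as Hs.
    pose proof (mm_bound k) as Hb.
    apply Rle_trans with (C * b1 ^ ph P k / (om * C * sg ^ ph P k)).
    + unfold Rdiv. apply Rle_trans with (C * b1 ^ ph P k * / sqrt (vv (S k))).
      * apply Rmult_le_compat_r. left; apply Rinv_0_lt_compat; lra. exact Hb.
      * apply Rmult_le_compat_l. nra. apply Rinv_le_contravar; lra.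
    + right. unfold rho, Rdiv. rewrite Rpow_mult_distr, pow_inv. field.
      repeat split; try lra; apply pow_nonzero; lra.
Qed.

Hypothesis HL1 : C * b1 ^ (L + 1) <= (1 - b1) / 2.
Hypothesis HL2 : C ^ 2 * b2 ^ (L + 1) <= 1.

Lemma u_up k : (L < ph P k)%nat -> mm (S k) / sqrt (vv (S k)) <= - ((1 - b1) / 4).
Proof.
  intros H.
  assert (Hk : exists k', k = S k') by (destruct k; [simpl in H; lia| eauto]).
  destruct Hk as [k' ->].
  assert (Eph : ph P (S k') = S (ph P k')).
  { destruct (ph_S P k' P_pos) as [[E _]|[E _]]; rewrite E in *; [auto|lia]. }
  assert (Hm : mm (S (S k')) <= - (1 - b1) / 2).
  { change (mm (S (S k'))) with (b1 * mm (S k') + (1 - b1) * cst (S k')).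
    rewrite (cst_up _ H). pose proof (mm_bound k').
    assert (b1 ^ (L + 1) >= b1 ^ S (ph P k')).
    { apply Rle_ge, pow_mono. lra. lia. }
    pose proof (Rmult_le_compat_l b1 _ _ (proj1 hb1) H0).
    assert (C * b1 ^ S (ph P k') <= C * b1 ^ (L + 1)) by (pose proof C_ge1; apply Rmult_le_compat_l; lra).
    replace (C * b1 ^ S (ph P k')) with (b1 * (C * b1 ^ ph P k')) in H3 by (simpl; ring).
    lra. }
  assert (Hv1 : 1 - b2 <= vv (S (S k'))).
  { change (vv (S (S k'))) with (b2 * vv (S k') + (1 - b2) * cst (S k') ^ 2).
    rewrite (cst_up _ H). pose proof (vv_nonneg (S k')). nra. }
  assert (Hv2 : vv (S (S k')) <= 4).
  { pose proof (vv_upper (S k')). assert (b2 ^ ph P (S k') <= b2 ^ (L + 1)) by (apply pow_mono; lia || lra).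
    assert (0 <= C ^ 2) by apply pow2_ge_0. nra. }
  assert (Hs1 : 0 < sqrt (vv (S (S k')))) by (apply sqrt_lt_R0; lra).
  assert (Hs2 : sqrt (vv (S (S k'))) <= 2).
  { replace 2 with (sqrt 4). apply sqrt_le_1_alt; lra.
    replace 4 with (2 ^ 2) by ring. apply sqrt_pow2; lra. }
  apply Rle_trans with (mm (S (S k')) / 2).
  - unfold Rdiv. assert (/ 2 <= / sqrt (vv (S (S k')))) by (apply Rinv_le_contravar; lra).
    nra.
  - lra.
Qed.


Definition cc (t : nat) : R := match t with O => 0 | S k => cst k end.

Variable alpha : R.
Hypothesis Ha : 0 < alpha.

Definition st (t : nat) : R := alpha / sqrt (INR t).

Fixpoint X (n : nat) : R :=
  match n with
  | O => 1
  | S k => clamp 0 1 (X k - alpha / sqrt (INR (S k)) * mm (S k) / sqrt (vv (S k)))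
  end.

Lemma state_eq n : adam_state 0 1 (fun t _ => cc t) 1 alpha b1 b2 n = (X n, mm n, vv n).
Proof.
  induction n. reflexivity.
  cbn [adam_state]. rewrite IHn. reflexivity.
Qed.

Lemma X_range n : 0 <= X n <= 1.
Proof.
  destruct n; simpl. lra. unfold clamp.
  split. apply Rmax_l. apply Rmax_lub. lra. apply Rmin_l.
Qed.

Lemma clamp_bound z : 1 - clamp 0 1 z <= Rmax 0 (1 - z).
Proof. unfold clamp, Rmax, Rmin. repeat destruct Rle_dec; lra. Qed.

Definition u (t : nat) : R := mm t / sqrt (vv t).

Lemma Y_step k : 1 - X (S k) <= Rmax 0 ((1 - X k) + st (S k) * u (S k)).
Proof.
  cbn [X]. eapply Rle_trans. apply clamp_bound. right.
  replace (1 - (X k - alpha / sqrt (INR (S k)) * mm (S k) / sqrt (vv (S k))))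
    with (1 - X k + st (S k) * u (S k)) by (unfold st, u, Rdiv; ring). reflexivity.
Qed.

Lemma st_pos t : 0 <= st t.
Proof. unfold st, Rdiv. apply Rmult_le_pos. lra.
  destruct (Req_dec (sqrt (INR t)) 0) as [E|E]. rewrite E, Rinv_0. lra.
  left. apply Rinv_0_lt_compat. pose proof (sqrt_pos (INR t)). lra. Qed.

Lemma st_mono a b : (1 <= a <= b)%nat -> st b <= st a.
Proof.
  intros H. unfold st, Rdiv. apply Rmult_le_compat_l. lra.
  apply Rinv_le_contravar. apply sqrt_lt_R0. apply lt_0_INR. lia.
  apply sqrt_le_1_alt. apply le_INR. lia.
Qed.

Lemma X_first k : (k < P)%nat -> X (S k) = 1.
Proof.
  induction k; intros H.
  - assert (X 0 = 1) by reflexivity.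
    assert (Hu : st 1 * u 1 <= 0).
    { pose proof (st_pos 1). assert (u 1 <= 0).
      { unfold u. apply div_nonpos. apply mm_first; auto. apply vv_nonneg. apply vv_zero. }
      nra. }
    pose proof (Y_step 0). pose proof (X_range 1). rewrite H0 in H1.
    assert (Rmax 0 (1 - 1 + st 1 * u 1) = 0) by (apply Rmax_left; lra). lra.
  - assert (Hu : st (S (S k)) * u (S (S k)) <= 0).
    { pose proof (st_pos (S (S k))). assert (u (S (S k)) <= 0).
      { unfold u. apply div_nonpos. apply mm_first; auto. apply vv_nonneg. apply vv_zero. }
      nra. }
    pose proof (Y_step (S k)). pose proof (X_range (S (S k))). rewrite IHk in H0 by lia.
    assert (Rmax 0 (1 - 1 + st (S (S k)) * u (S (S k))) = 0) by (apply Rmax_left; lra). lra.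
Qed.


Definition K : R := / om / (1 - rho).
Definition eta : R := (1 - b1) / 4.
Definition G (j : nat) : R := (1 - rho ^ (j + 1)) / (1 - rho).

Hypothesis HNbig : 2 * K <= INR N * eta.

Lemma K_pos : 0 < K.
Proof. pose proof om_pos. pose proof rho_range. unfold K, Rdiv.
  apply Rmult_lt_0_compat; apply Rinv_0_lt_compat; lra. Qed.

Lemma G_le j : / om * G j <= K.
Proof.
  pose proof om_pos. pose proof rho_range. unfold K, G, Rdiv.
  assert (0 <= rho ^ (j + 1)) by (apply pow_le; lra).
  assert (0 < / om) by (apply Rinv_0_lt_compat; lra).
  assert (0 < / (1 - rho)) by (apply Rinv_0_lt_compat; lra).
  apply Rmult_le_compat_l. lra. nra.
Qed.

Lemma G_S j : G (S j) = G j + rho ^ (S j).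
Proof.
  pose proof rho_range. unfold G. replace (S j + 1)%nat with (S (j + 1)) by lia.
  replace (j + 1)%nat with (S j) by lia. simpl. field. lra.
Qed.

Lemma G_nonneg j : 0 <= G j.
Proof. pose proof rho_range. unfold G, Rdiv. apply Rmult_le_pos.
  assert (rho ^ (j + 1) <= 1) by (apply pow_le1; lra). lra.
  left; apply Rinv_0_lt_compat; lra. Qed.

Lemma G_0 : G 0 = 1.
Proof. pose proof rho_range. unfold G. simpl. field. lra. Qed.

Definition Y (n : nat) : R := 1 - X n.

Definition Inv (k : nat) : Prop :=
  ((ph P k <= L)%nat -> Y (S k) <= st (S k - ph P k) * (/ om * G (ph P k))) /\
  ((L < ph P k)%nat -> Y (S k) <= Rmax 0 (st (S k - ph P k) * K - INR (ph P k - L) * eta * st (S k))).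

Lemma Rmax_mono a b : a <= b -> Rmax 0 a <= Rmax 0 b.
Proof. unfold Rmax; repeat destruct Rle_dec; lra. Qed.

Lemma Rmax_le a b : 0 <= b -> a <= b -> Rmax 0 a <= b.
Proof. intros. apply Rmax_lub; lra. Qed.

Lemma start_X k : ph P (S k) = O -> ((P <= k)%nat -> Inv k) -> X (S k) = 1.
Proof.
  intros E HI. pose proof (X_range (S k)).
  destruct (Nat.lt_ge_cases k P) as [Hk|Hk]. apply X_first; auto.
  destruct (ph_S P k P_pos) as [[E2 H1]|[E2 H1]]. lia.
  destruct (HI Hk) as [_ H2]. assert (HLp : (L < ph P k)%nat) by (unfold P in *; lia).
  specialize (H2 HLp).
  pose proof (start_ge P k P_pos Hk) as Hq. pose proof (ph_le P k P_pos).
  set (q := (S k - ph P k)%nat) in *.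
  assert (Hn : (ph P k - L = N)%nat) by (unfold P in *; lia). rewrite Hn in H2.
  assert (st q * K <= INR N * eta * st (S k)).
  { assert (st q <= 2 * st (S k)).
    { unfold st. assert (0 < INR q) by (apply lt_0_INR; unfold P in *; lia).
      assert (INR (S k) <= 4 * INR q).
      { replace 4 with (INR 4) by (simpl; ring). rewrite <- mult_INR. apply le_INR. unfold P in *; lia. }
      assert (0 < sqrt (INR q)) by (apply sqrt_lt_R0; lra).
      assert (sqrt (INR (S k)) <= 2 * sqrt (INR q)).
      { replace 2 with (sqrt 4). rewrite <- sqrt_mult by lra. apply sqrt_le_1_alt; lra.
        replace 4 with (2 ^ 2) by ring. apply sqrt_pow2; lra. }
      assert (0 < sqrt (INR (S k))) by (apply sqrt_lt_R0; apply lt_0_INR; lia).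
      set (a := sqrt (INR (S k))) in *. set (b := sqrt (INR q)) in *.
      assert (0 <= 2 * / a - / b).
      { replace (2 * / a - / b) with ((2 * b - a) * (/ a * / b)) by (field; lra).
        apply Rmult_le_pos. lra. apply Rmult_le_pos; left; apply Rinv_0_lt_compat; lra. }
      unfold Rdiv. nra. }
    pose proof K_pos. pose proof (st_pos q). pose proof (st_pos (S k)). nra. }
  assert (Rmax 0 (st q * K - INR N * eta * st (S k)) = 0) by (apply Rmax_left; lra).
  unfold Y in H2. lra.
Qed.

Lemma inv_all k : (P <= k)%nat -> Inv k.
Proof.
  induction k; intros Hk. exfalso; pose proof P_pos; lia.
  assert (HI : (P <= k)%nat -> Inv k) by auto. clear IHk.
  pose proof (Y_step (S k)) as Hst. fold (Y (S k)) (Y (S (S k))) in Hst.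
  pose proof (X_range (S k)). pose proof (st_pos (S (S k))).
  destruct (ph_S P k P_pos) as [[E H1]|[E H1]].
  -
    assert (Hk' : (P <= k)%nat).
    { destruct (Nat.lt_ge_cases k P) as [h|h]; auto. rewrite (ph_small P k P_pos h) in H1. lia. }
    destruct (HI Hk') as [I1 I2]. pose proof (ph_le P k P_pos).
    replace (S (S k) - ph P (S k))%nat with (S k - ph P k)%nat by (rewrite E; lia).
    set (q := (S k - ph P k)%nat) in *.
    assert (Hsq : st (S (S k)) <= st q) by (apply st_mono; lia).
    pose proof om_pos. pose proof rho_range.
    split; intros Hj; rewrite E in Hj |- *;
      replace (S (S k) - S (ph P k))%nat with q by (unfold q; lia);
      (eapply Rle_trans; [apply Hst|]).
    + specialize (I1 ltac:(lia)).
      pose proof (u_down (S k)) as Hu. rewrite E in Hu. fold (u (S (S k))) in Hu.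
      assert (0 <= rho ^ S (ph P k) / om).
      { unfold Rdiv. apply Rmult_le_pos. apply pow_le; lra. left; apply Rinv_0_lt_compat; lra. }
      assert (st (S (S k)) * u (S (S k)) <= st q * (rho ^ S (ph P k) / om)).
      { pose proof (Rmult_le_compat_l (st (S (S k))) _ _ H0 Hu).
        pose proof (Rmult_le_compat_r (rho ^ S (ph P k) / om) _ _ H5 Hsq). lra. }
      pose proof (G_nonneg (S (ph P k))). pose proof (st_pos q).
      apply Rmax_le. apply Rmult_le_pos. auto. apply Rmult_le_pos; auto. left; apply Rinv_0_lt_compat; lra.
      rewrite G_S. unfold Rdiv in *. lra.
    + pose proof (u_up (S k) ltac:(lia)) as Hu. fold (u (S (S k))) in Hu. fold eta in Hu.
      assert (st (S (S k)) * u (S (S k)) <= - (eta * st (S (S k)))) by nra.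
      destruct (Nat.eq_dec (ph P k) L) as [EL|EL].
      * rewrite EL in I1 |- *. specialize (I1 (le_n _)). pose proof (G_le L).
        replace (S L - L)%nat with 1%nat by lia.
        apply Rmax_mono. simpl INR.
        pose proof (st_pos q). nra.
      * specialize (I2 ltac:(lia)).
        replace (S (ph P k) - L)%nat with (S (ph P k - L)) by lia. rewrite S_INR.
        assert (Hd : st (S (S k)) <= st (S k)) by (apply st_mono; lia).
        assert (0 <= INR (ph P k - L)) by apply pos_INR.
        assert (0 < eta) by (unfold eta; lra).
        assert (Y (S k) + st (S (S k)) * u (S (S k)) <=
          Rmax 0 (st q * K - INR (ph P k - L) * eta * st (S k)) - eta * st (S (S k))) by lra.
        eapply Rle_trans. apply Rmax_mono. exact H8.
        assert (INR (ph P k - L) * eta * st (S (S k)) <= INR (ph P k - L) * eta * st (S k)) by (apply Rmult_le_compat_l; [apply Rmult_le_pos; lra|exact Hd]).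
        assert (0 <= eta * st (S (S k))) by (apply Rmult_le_pos; lra).
        unfold Rmax at 1 2 3. repeat destruct Rle_dec; lra.
  -
    assert (HX : X (S k) = 1) by (apply start_X; auto).
    assert (Y (S k) = 0) by (unfold Y; lra).
    unfold Inv. rewrite E. split; intros Hj.
    + pose proof (u_down (S k)) as Hu. rewrite E in Hu. fold (u (S (S k))) in Hu.
      rewrite Nat.sub_0_r, G_0. simpl pow in Hu. pose proof om_pos.
      eapply Rle_trans. apply Hst. rewrite H2, Rplus_0_l.
      apply Rmax_le. apply Rmult_le_pos. auto. rewrite Rmult_1_r. left; apply Rinv_0_lt_compat; lra.
      unfold Rdiv in Hu. rewrite Rmult_1_l in Hu. rewrite Rmult_1_r.
      apply Rmult_le_compat_l; auto.
    + lia.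
Qed.

Lemma Y_small k : (P <= k)%nat -> 0 <= Y (S k) <= st (S k - ph P k) * K.
Proof.
  intros Hk. pose proof (X_range (S k)). split. unfold Y; lra.
  destruct (inv_all k Hk) as [I1 I2].
  destruct (Nat.le_gt_cases (ph P k) L) as [h|h].
  - specialize (I1 h). pose proof (G_le (ph P k)). pose proof (st_pos (S k - ph P k)). nra.
  - specialize (I2 h). eapply Rle_trans. apply I2. apply Rmax_le.
    pose proof K_pos. pose proof (st_pos (S k - ph P k)). nra.
    pose proof (st_pos (S k)). pose proof (pos_INR (ph P k - L)).
    assert (0 < eta) by (unfold eta; lra).
    assert (0 <= INR (ph P k - L) * eta * st (S k)) by (apply Rmult_le_pos; [apply Rmult_le_pos|]; lra).
    lra.
Qed.


Lemma Y_range n : 0 <= Y n <= 1.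
Proof. pose proof (X_range n). unfold Y. lra. Qed.

Lemma Y_eventually eps : 0 < eps -> exists t0, forall n, (t0 <= n)%nat -> Y n <= eps.
Proof.
  intros He. pose proof K_pos.
  set (a := alpha * K / eps).
  assert (Ha' : 0 < a) by (unfold a, Rdiv; apply Rmult_lt_0_compat; [nra|apply Rinv_0_lt_compat; lra]).
  destruct (INR_unbounded (a ^ 2)) as [M HM].
  exists (S (P + M)). intros n Hn.
  destruct n as [|k]. lia.
  assert (Hk : (P <= k)%nat) by lia.
  destruct (Y_small k Hk) as [_ H1].
  pose proof (ph_lt P k P_pos).
  assert (st (S k - ph P k) <= st (S M)) by (apply st_mono; lia).
  assert (st (S M) * K <= eps).
  { unfold st. assert (a <= sqrt (INR (S M))).
    { apply sqrt_ge. lra. rewrite S_INR. lra. }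
    assert (0 < sqrt (INR (S M))) by lra.
    apply (Rmult_le_reg_l (sqrt (INR (S M)) / eps)).
    unfold Rdiv; apply Rmult_lt_0_compat; [lra|apply Rinv_0_lt_compat; lra].
    replace (sqrt (INR (S M)) / eps * (alpha / sqrt (INR (S M)) * K)) with a
      by (unfold a; field; lra).
    replace (sqrt (INR (S M)) / eps * eps) with (sqrt (INR (S M))) by (field; lra). lra. }
  pose proof (st_pos (S k - ph P k)). nra.
Qed.

Lemma cst_mid k : ph P k <> O -> (ph P k <= L)%nat -> cst k = 0.
Proof.
  intros H1 H2. unfold cst. apply Nat.eqb_neq in H1. rewrite H1.
  destruct (Nat.ltb_spec L (ph P k)). lia. reflexivity.
Qed.

Lemma sum_inv k : INR P * sum1 cc (S k) =
  INR (S k) - INR (S (ph P k)) - INR P - INR P * INR N + INR P * (C - INR (ph P k - L)).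
Proof.
  induction k.
  - simpl sum1. simpl ph. unfold cc. unfold cst. simpl.
    destruct (Nat.leb P 0) eqn:E. apply Nat.leb_le in E. pose proof P_pos. lia.
    unfold C. simpl. ring.
  - change (sum1 cc (S (S k))) with (sum1 cc (S k) + cst (S k)).
    rewrite Rmult_plus_distr_l, IHk.
    destruct (ph_S P k P_pos) as [[E H1]|[E H1]]; rewrite E.
    + destruct (Nat.le_gt_cases L (ph P k)) as [h|h].
      * rewrite (cst_up (S k)) by (rewrite E; lia).
        replace (S (ph P k) - L)%nat with (S (ph P k - L)) by lia.
        rewrite !S_INR. ring.
      * rewrite (cst_mid (S k)) by (rewrite E; lia).
        replace (S (ph P k) - L)%nat with O by lia.
        replace (ph P k - L)%nat with O by lia.
        rewrite !S_INR. ring.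
    + pose proof (ph_le P k P_pos).
      rewrite (cst_big (S k) E) by lia.
      replace (ph P k - L)%nat with N by (unfold P in *; lia).
      rewrite H1. replace (0 - L)%nat with O by lia.
      rewrite !(S_INR (S k)). change (INR 1) with 1. change (INR 0) with 0. unfold C. ring.
Qed.

Lemma sum_lower T : INR P * sum1 cc T >= INR T - INR P * (INR N + 1).
Proof.
  pose proof (pos_INR P). pose proof (pos_INR N).
  destruct T as [|k].
  - simpl. nra.
  - rewrite sum_inv. pose proof (ph_lt P k P_pos).
    assert (INR (S (ph P k)) <= INR P) by (apply le_INR; lia).
    assert (INR (ph P k - L) <= INR N) by (apply le_INR; unfold P in *; lia).
    unfold C. nra.
Qed.


Lemma sum1_lin (h : nat -> R) x T : sum1 (fun t => h t * x) T = sum1 h T * x.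
Proof. induction T; simpl. ring. rewrite IHT. ring. Qed.

Lemma sum1_bound (y : nat -> R) t0 eps T :
  (forall t, 0 <= y t <= 1) -> (forall t, (t0 <= t)%nat -> y t <= eps) -> 0 <= eps ->
  sum1 y T <= INR t0 + eps * INR T.
Proof.
  intros H1 H2 He.
  assert (Hs : forall T, sum1 y T <= INR T).
  { induction T0; cbn [sum1]. simpl; lra. rewrite S_INR. specialize (H1 (S T0)). lra. }
  induction T; cbn [sum1]. pose proof (pos_INR t0). simpl; lra.
  rewrite S_INR. destruct (Nat.le_gt_cases t0 (S T)) as [h|h].
  - specialize (H2 _ h). lra.
  - pose proof (Hs (S T)) as HsT. cbn [sum1] in HsT.
    assert (INR (S T) <= INR t0) by (apply le_INR; lia). rewrite S_INR in *.
    pose proof (pos_INR T). nra.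
Qed.

Definition ff (t : nat) (x : R) : R := cc t * x.
Definition gg (t : nat) (x : R) : R := cc t.

Lemma iter_eq t : adam_iter 0 1 gg 1 alpha b1 b2 t = X (pred t).
Proof. unfold adam_iter, gg. rewrite state_eq. reflexivity. Qed.

Lemma regret_exists T : exists r, adam_regret 0 1 ff gg 1 alpha b1 b2 T r.
Proof.
  exists (sum1 (fun t => ff t (adam_iter 0 1 gg 1 alpha b1 b2 t)) T - Rmin 0 (sum1 cc T)).
  exists (Rmin 0 (sum1 cc T)). split; [|reflexivity].
  unfold ff. split.
  - unfold Rmin. destruct (Rle_dec 0 (sum1 cc T)).
    + exists 0. split. lra. rewrite sum1_lin. ring.
    + exists 1. split. lra. rewrite sum1_lin. ring.
  - intros x Hx. rewrite sum1_lin. unfold Rmin. destruct (Rle_dec 0 (sum1 cc T)); nra.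
Qed.

Lemma cc_le t : cc t <= C.
Proof. destruct t; simpl. pose proof C_ge1; lra. apply cst_le. Qed.

Lemma sum_cx T : sum1 (fun t => ff t (adam_iter 0 1 gg 1 alpha b1 b2 t)) T >=
          sum1 cc T - C * sum1 (fun t => Y (pred t)) T.
Proof.
  induction T; cbn [sum1]. lra. rewrite iter_eq. unfold ff at 2.
  pose proof (cc_le (S T)). pose proof (Y_range (pred (S T))). unfold Y in *.
  assert (cc (S T) * X (pred (S T)) >= cc (S T) - C * (1 - X (pred (S T)))) by nra.
  lra.
Qed.

Lemma regret_lower T r : adam_regret 0 1 ff gg 1 alpha b1 b2 T r ->
  r >= sum1 cc T - C * sum1 (fun t => Y (pred t)) T.
Proof.
  intros [c [[_ Hmin] Hr]]. specialize (Hmin 0 ltac:(lra)).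
  unfold ff in Hmin; cbv beta in Hmin. rewrite sum1_lin, Rmult_0_r in Hmin. rewrite Hr.
  pose proof (sum_cx T). lra.
Qed.

Lemma regret_not_cv r : (forall T, adam_regret 0 1 ff gg 1 alpha b1 b2 T (r T)) ->
  ~ Un_cv (fun T => r T / INR T) 0.
Proof.
  intros Hr Hcv.
  pose proof C_ge1. pose proof P_pos as HP. assert (Hp : 0 < INR P) by (apply lt_0_INR; lia).
  set (p := INR P) in *.
  set (eps := / (2 * p * C)).
  assert (Heps : 0 < eps) by (unfold eps; apply Rinv_0_lt_compat; nra).
  destruct (Y_eventually eps Heps) as [t0 Ht0].
  set (D := INR N + 1 + C * INR (S t0)).
  assert (HD : 0 <= D) by (unfold D; pose proof (pos_INR N); pose proof (pos_INR (S t0)); nra).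
  assert (Hlow : forall T, r T >= INR T / (2 * p) - D).
  { intros T. pose proof (regret_lower T (r T) (Hr T)).
    pose proof (sum_lower T). fold p in H1.
    assert (sum1 (fun t => Y (pred t)) T <= INR (S t0) + eps * INR T).
    { apply sum1_bound. intros; apply Y_range. intros t ht. apply Ht0. lia. lra. }
    assert (Hi : 0 < / p) by (apply Rinv_0_lt_compat; lra).
    assert (sum1 cc T >= INR T / p - (INR N + 1)).
    { apply Rle_ge. apply Rge_le in H1.
      pose proof (Rmult_le_compat_l (/ p) _ _ (Rlt_le _ _ Hi) H1).
      replace (/ p * (p * sum1 cc T)) with (sum1 cc T) in H3 by (field; lra).
      replace (/ p * (INR T - p * (INR N + 1))) with (INR T / p - (INR N + 1)) in H3 by (field; lra).
      lra. }
    assert (HCe : C * eps = / (2 * p)) by (unfold eps; field; lra).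
    assert (0 <= C) by lra.
    pose proof (Rmult_le_compat_l C _ _ H4 H2).
    unfold D. replace (INR T / (2 * p)) with (INR T / p - C * eps * INR T)
      by (rewrite HCe; field; lra).
    lra. }
  assert (He4 : / (4 * p) > 0) by (apply Rlt_gt, Rinv_0_lt_compat; lra).
  destruct (Hcv _ He4) as [N0 HN0].
  destruct (INR_unbounded (4 * p * D)) as [M HM].
  set (n := (N0 + M + 1)%nat).
  specialize (HN0 n ltac:(unfold n; lia)). unfold R_dist in HN0.
  rewrite Rminus_0_r in HN0. apply Rabs_def2 in HN0. destruct HN0 as [HN0 _].
  assert (Hn : INR M <= INR n) by (apply le_INR; unfold n; lia).
  assert (Hn0 : 0 < INR n) by (apply lt_0_INR; unfold n; lia).
  specialize (Hlow n).
  assert (r n > INR n / (4 * p)).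
  { assert (INR n / (2 * p) - D - INR n / (4 * p) = (INR n - 4 * p * D) / (4 * p)) by (field; lra).
    assert (0 < (INR n - 4 * p * D) / (4 * p)).
    { unfold Rdiv. apply Rmult_lt_0_compat. lra. apply Rinv_0_lt_compat. lra. }
    lra. }
  assert (r n / INR n > / (4 * p)).
  { apply Rlt_gt. apply (Rmult_lt_reg_r (INR n)). lra.
    replace (r n / INR n * INR n) with (r n) by (field; lra).
    replace (/ (4 * p) * INR n) with (INR n / (4 * p)) by (field; lra). lra. }
  lra.
Qed.

End Adam.

Theorem theorem2 (beta1 beta2 : R)
  (hb1 : 0 <= beta1 < 1) (hb2 : 0 <= beta2 < 1) (hlt : beta1 < sqrt beta2) :
  exists (a b : R) (f g : nat -> R -> R) (x1 : R),
    a <= b /\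
    (forall t, convex_fun (f t)) /\
    (forall t x, derivable_pt_lim (f t) x (g t x)) /\
    (exists G, forall t x, a <= x <= b -> Rabs (g t x) <= G) /\
    a <= x1 <= b /\
    forall alpha, 0 < alpha ->
      (forall T, exists r, adam_regret a b f g x1 alpha beta1 beta2 T r) /\
      (forall r : nat -> R,
         (forall T, adam_regret a b f g x1 alpha beta1 beta2 T (r T)) ->
         ~ Un_cv (fun T => r T / INR T) 0).
Proof.
  pose proof (K_pos beta1 beta2 hb1 hb2 hlt) as HK.
  assert (He : 0 < eta beta1) by (unfold eta; lra).
  destruct (INR_unbounded (2 * K beta1 beta2 / eta beta1)) as [N0 HN0].
  set (N := S N0).
  assert (HNbig : 2 * K beta1 beta2 <= INR N * eta beta1).
  { unfold N. rewrite S_INR.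
    assert (2 * K beta1 beta2 = (2 * K beta1 beta2 / eta beta1) * eta beta1) by (field; lra).
    nra. }
  assert (HC : 1 <= C N) by (apply C_ge1).
  assert (Hy1 : 0 < (1 - beta1) / (2 * C N)) by (apply Rdiv_lt_0_compat; lra).
  assert (Hy2 : 0 < 1 / (C N ^ 2)) by (apply Rdiv_lt_0_compat; [lra| nra]).
  destruct (pow_lt_1_zero beta1 ltac:(rewrite Rabs_right; lra) _ Hy1) as [L1 HL1].
  destruct (pow_lt_1_zero beta2 ltac:(rewrite Rabs_right; lra) _ Hy2) as [L2 HL2].
  set (L := (L1 + L2)%nat).
  assert (HB1 : C N * beta1 ^ (L + 1) <= (1 - beta1) / 2).
  { specialize (HL1 (L + 1)%nat ltac:(unfold L; lia)).
    rewrite Rabs_right in HL1 by (apply Rle_ge, pow_le; lra).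
    apply Rmult_lt_compat_l with (r := C N) in HL1; [|lra].
    replace (C N * ((1 - beta1) / (2 * C N))) with ((1 - beta1) / 2) in HL1 by (field; lra). lra. }
  assert (HB2 : C N ^ 2 * beta2 ^ (L + 1) <= 1).
  { specialize (HL2 (L + 1)%nat ltac:(unfold L; lia)).
    rewrite Rabs_right in HL2 by (apply Rle_ge, pow_le; lra).
    apply Rmult_lt_compat_l with (r := C N ^ 2) in HL2; [|nra].
    replace (C N ^ 2 * (1 / C N ^ 2)) with 1 in HL2 by (field; lra). lra. }
  exists 0, 1, (ff L N), (gg L N), 1.
  split; [lra|]. split; [|split; [|split; [|split]]].
  - intros t x y l Hl. unfold ff. right. ring.
  - intros t x eps Heps. exists (mkposreal 1 Rlt_0_1). intros h Hh _.
    unfold ff, gg. replace ((cc L N t * (x + h) - cc L N t * x) / h - cc L N t) with 0 by (field; auto).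
    rewrite Rabs_R0. lra.
  - exists (C N). intros t x _. unfold gg. apply Rabs_le. split.
    + destruct t; simpl. lra. pose proof (cst_ge L N t). lra.
    + apply cc_le.
  - lra.
  - intros alpha Ha. split.
    + intros T. apply regret_exists.
    + intros r Hr. exact (regret_not_cv beta1 beta2 hb1 hb2 hlt L N ltac:(unfold N; lia) HB1 HB2 alpha Ha HNbig r Hr).
Qed.
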